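(* Let $G$ be a $\mathbb{P}$-generic filter over a ground model $V$, and let $(G_k)_{k\in\omega}\in\prod_{k\in\omega}\mathbb{C}_k$ be the generic sequence, i.e. the unique function $g$ on $\omega$ with $g\restriction m\in T$ for all $T\in G$ and $m\in\omega$, $G_k=g(k)$. Then in $V[G]$, $V\cap[0,1]^n\subset\bigcap_{m\in\omega}\bigcup_{k\ge m}G_k$; that is, every point of $[0,1]^n$ lying in $V$ belongs to $G_k$ for infinitely many $k$.
   Context: Fix a positive integer $n$ and real $0<r<n$. For each $k\in\omega$ fix $M_k\in\omega$ with $2^k(\sqrt{n}/M_k)^r<2^{-k}$. $C_k$ is the set of cubes $[\frac{j_0}{M_k},\frac{j_0+1}{M_k}]\times\cdots\times[\frac{j_{n-1}}{M_k},\frac{j_{n-1}+1}{M_k}]$ with $j_i\in\{0,\dots,M_k-1\}$; $\mathbb{C}_k$ is the set of unions of $2^k$ (not necessarily distinct) elements of $C_k$. Norm $\nu$ on $X\subset\mathbb{C}_k$: $\nu(X)\ge0$ always; $\nu(X)\ge1$ iff $\bigcup X=[0,1]^n$; for $j\ge1$, $\nu(X)\ge j+1$ iff for every partition $X=X_0\cup X_1$ some $\nu(X_i)\ge j$; $\nu(X)$ is the largest such $j$. Finite sequences are functions on natural numbers $m=\{0,\dots,m-1\}$, $|t|$ is the length; a tree is a set of finite sequences closed under initial segments; $\mathrm{succ}_T(t)$ is the set of immediate successors of $t$ in $T$, with $\nu(\mathrm{succ}_T(t)):=\nu(\{s(|t|):s\in\mathrm{succ}_T(t)\})$; a branching node is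 $t$ with $|\mathrm{succ}_T(t)|>1$. $\mathbb{P}$ consists of all $T$ with: (1) $T$ a nonempty tree; (2) $t(k)\in\mathbb{C}_k$ for $t\in T$, $k<|t|$; (3) $\mathrm{succ}_T(t)\neq\emptyset$ for all $t\in T$; (4) every node has a branching extension in $T$; (5) for each $K\in\omega$ only finitely many branching nodes $t$ have $\nu(\mathrm{succ}_T(t))\le K$. Ordered by inclusion. *)

(* Defs.v *)
From Stdlib Require Import Reals Lra Lia List.
Import ListNotations.
Open Scope R_scope.

(* Points of R^n are represented as functions nat -> R; only coordinates
   i < n are ever inspected. *)
Definition point := nat -> R.
Definition pset := point -> Prop.

Definition in_unit_cube (n : nat) (x : point) : Prop :=
  forall i, (i < n)%nat -> 0 <= x i <= 1.

Definition cube (n M : nat) (j : nat -> nat) : pset :=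
  fun x => forall i, (i < n)%nat ->
    INR (j i) / INR M <= x i <= (INR (j i) + 1) / INR M.

Definition in_Ck (n : nat) (M : nat -> nat) (k : nat) (c : pset) : Prop :=
  exists j : nat -> nat, (forall i, (i < n)%nat -> (j i < M k)%nat) /\ c = cube n (M k) j.

(* U is an element of the blackboard-C_k: a union of 2^k (not necessarily
   distinct) elements of C_k *)
Definition in_CCk (n : nat) (M : nat -> nat) (k : nat) (U : pset) : Prop :=
  exists f : nat -> pset,
    (forall l, (l < 2 ^ k)%nat -> in_Ck n M k (f l)) /\
    U = (fun x => exists l, (l < 2 ^ k)%nat /\ f l x).

(* norm_ge n X j  <->  nu(X) >= j *)
Fixpoint norm_ge (n : nat) (X : pset -> Prop) (j : nat) : Prop :=
  match j with
  | O => True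
  | S O => forall x, (exists c, X c /\ c x) <-> in_unit_cube n x
  | S (S j' as j1) =>
      forall X0 X1 : pset -> Prop,
        (forall c, X c <-> (X0 c \/ X1 c)) ->
        (forall c, ~ (X0 c /\ X1 c)) ->
        norm_ge n X0 j1 \/ norm_ge n X1 j1
  end.

Definition tree := list pset -> Prop.

Definition succset (T : tree) (t : list pset) : pset -> Prop :=
  fun c => T (t ++ [c]).

Definition branching (T : tree) (t : list pset) : Prop :=
  exists c1 c2, c1 <> c2 /\ T (t ++ [c1]) /\ T (t ++ [c2]).

Definition default_pset : pset := fun _ => False.

Definition inP (n : nat) (M : nat -> nat) (T : tree) : Prop :=
  (exists t, T t) /\
  (forall t m, T t -> T (firstn m t)) /\
  (forall t k, T t -> (k < length t)%nat -> in_CCk n M k (nth k t default_pset)) /\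
  (forall t, T t -> exists c, T (t ++ [c])) /\
  (forall t, T t -> exists u, T (t ++ u) /\ branching T (t ++ u)) /\
  (* (5) for each K only finitely many branching nodes have nu(succ) <= K *)
  (forall K : nat, exists L : list (list pset),
     forall t, T t -> branching T t -> ~ norm_ge n (succset T t) (S K) -> In t L).

(* Main.v *)
Require Import Defs.
From Stdlib Require Import Reals List Lia Classical.
Import ListNotations.
Open Scope R_scope.

Definition prefix (a b : list pset) : Prop := exists p, b = a ++ p.

Lemma list_bound (L : list (list pset)) :
  exists N, forall t, In t L -> (length t < N)%nat.
Proof.
  induction L as [|a L [N HN]].
  - exists 0%nat; intros t H; destruct H.
  - exists (N + length a + 1)%nat; simpl; intros t [<-|H]; [lia|].
    specialize (HN t H); lia.
Qed.

Lemma long_node n M T : inP n M T -> forall N, exists t, T t /\ (N <= length t)%nat.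
Proof.
  intros HP; destruct HP as [Hne [_ [_ [Hsucc _]]]].
  induction N as [|N [t [Ht Hl]]].
  - destruct Hne as [t Ht]; exists t; split; auto; lia.
  - destruct (Hsucc t Ht) as [c Hc]. exists (t ++ [c]); split; auto.
    rewrite length_app; simpl; lia.
Qed.

Lemma norm_ge_ext n (X Y : pset -> Prop) j :
  (forall c, X c <-> Y c) -> norm_ge n X j -> norm_ge n Y j.
Proof.
  intros Hxy. destruct j as [|[|j']]; simpl; intros H; auto.
  - intros y. rewrite <- (H y). split; intros [c [Hc Hcy]]; exists c; split; auto;
      apply Hxy; auto.
  - intros X0 X1 Hpart Hdisj. apply H; auto.
    intros c; split; intro Hc; [apply Hpart, Hxy | apply Hxy, Hpart]; auto.
Qed.

Lemma comparable_nth (a b : list pset) i :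
  (prefix a b \/ prefix b a) -> (i < length a)%nat -> (i < length b)%nat ->
  nth i a default_pset = nth i b default_pset.
Proof.
  intros [[p Hp]|[p Hp]] Ha Hb; subst; rewrite app_nth1; auto.
Qed.

Theorem lemma4p8 (n : nat) (r : R) (M : nat -> nat)
  (Hn : (0 < n)%nat) (Hr0 : 0 < r) (Hrn : r < INR n)
  (HM0 : forall k, (0 < M k)%nat)
  (HM : forall k, 2 ^ k * Rpower (sqrt (INR n) / INR (M k)) r < / 2 ^ k) :
  forall x : point, in_unit_cube n x ->
  forall (m : nat) (T : tree), inP n M T ->
  exists T' : tree, inP n M T' /\ (forall t, T' t -> T t) /\
    exists k : nat, (m <= k)%nat /\
      forall t, T' t -> (k < length t)%nat -> nth k t default_pset x.
Proof.
  intros x Hx m T HT.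
  assert (HT' := HT).
  destruct HT as [H1 [H2 [H3 [H4 [H5 H6]]]]].
  destruct (H6 0%nat) as [L HL].
  destruct (list_bound L) as [N HN].
  destruct (long_node _ _ _ HT' (max m N)) as [t0 [Ht0 Hlen0]].
  destruct (H5 t0 Ht0) as [u [Hu Hbr]].
  set (s := t0 ++ u) in *.
  assert (Hnorm : norm_ge n (succset T s) 1).
  { apply NNPP; intro Hn'. specialize (HL s Hu Hbr Hn'). apply HN in HL.
    unfold s in HL; rewrite length_app in HL; lia. }
  simpl in Hnorm. destruct (proj2 (Hnorm x) Hx) as [c [Hc Hcx]].
  unfold succset in Hc.
  set (w := s ++ [c]) in *.
  pose (T' := fun t : list pset => T t /\ (prefix t w \/ prefix w t)).
  assert (Hlift : forall v, prefix w v -> branching T v -> branching T' v).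
  { intros v [p Hp] [c1 [c2 [Hne [Hc1 Hc2]]]]. exists c1, c2; split; auto.
    split; split; auto; right; [exists (p ++ [c1])|exists (p ++ [c2])];
      rewrite Hp, <- app_assoc; reflexivity. }
  exists T'. split; [|split].
  - unfold inP. split; [|split; [|split; [|split; [|split]]]].
    + exists w; split; auto; right; exists []; rewrite app_nil_r; auto.
    + intros t k [Ht Hp]. split; [apply H2; auto|].
      destruct Hp as [[p Hp]|[p Hp]].
      * left. exists (skipn k t ++ p). rewrite Hp, app_assoc, firstn_skipn; reflexivity.
      * subst t. rewrite firstn_app. destruct (Compare_dec.le_lt_dec k (length w)).
        -- replace (k - length w)%nat with 0%nat by lia; simpl; rewrite app_nil_r.
           left. exists (skipn k w); rewrite firstn_skipn; auto.
        -- rewrite firstn_all2 by lia. right; exists (firstn (k - length w) p); auto.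
    + intros t k [Ht _]; apply H3; auto.
    + intros t [Ht [[p Hp]|[p Hp]]].
      * destruct p as [|d p'].
        -- rewrite app_nil_r in Hp. destruct (H4 t Ht) as [c' Hc'].
           exists c'; split; auto; right; exists [c']; rewrite Hp; auto.
        -- exists d. split.
           ++ assert (E : firstn (length t + 1) w = t ++ [d]).
              { rewrite Hp, firstn_app_2; reflexivity. }
              rewrite <- E; apply H2; auto.
           ++ left; exists p'; rewrite Hp, <- app_assoc; reflexivity.
      * destruct (H4 t Ht) as [c' Hc']; exists c'; split; auto; right;
          exists (p ++ [c']); rewrite Hp, <- app_assoc; reflexivity.
    + intros t [Ht [[p Hp]|[p Hp]]].
      * destruct (H5 w Hc) as [u' [Hu' Hb']]. exists (p ++ u').
        rewrite app_assoc, <- Hp. split.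
        -- split; auto; right; exists u'; auto.
        -- apply Hlift; [exists u'; auto | auto].
      * destruct (H5 t Ht) as [u' [Hu' Hb']]. exists u'.
        assert (Pw : prefix w (t ++ u')).
        { exists (p ++ u'); rewrite Hp, <- app_assoc; reflexivity. }
        split; [split; auto|apply Hlift; auto].
    + intros K. destruct (H6 K) as [L' HL']. exists L'.
      intros t [Ht Hpt] Hb Hnn.
      assert (Hpw : prefix w t).
      { destruct Hpt as [Hp|Hp]; auto. destruct Hp as [q Hq].
        destruct q as [|d q'].
        - exists []; rewrite Hq, !app_nil_r; auto.
        - exfalso. destruct Hb as [c1 [c2 [Hne [[_ P1] [_ P2]]]]].
          assert (Lw : length w = (length t + S (length q'))%nat).
          { rewrite Hq, length_app; reflexivity. }
          assert (e1 := comparable_nth _ _ (length t) P1).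
          assert (e2 := comparable_nth _ _ (length t) P2).
          rewrite length_app in e1, e2; simpl in e1, e2.
          rewrite nth_middle in e1, e2.
          apply Hne. rewrite e1, e2 by lia. reflexivity. }
      apply HL'; auto.
      * destruct Hb as [c1 [c2 [Hne [[Hc1 _] [Hc2 _]]]]]; exists c1, c2; auto.
      * intro Hno; apply Hnn; apply norm_ge_ext with (succset T t); auto.
        intros c'; unfold succset, T'; split.
        -- intros H; split; auto; right; destruct Hpw as [p Hp];
             exists (p ++ [c']); rewrite Hp, <- app_assoc; auto.
        -- intros [H _]; auto.
  - intros t [Ht _]; auto.
  - exists (length s). split.
    + unfold s; rewrite length_app; lia.
    + intros t [Ht Hp] Hk.
      assert (Lw : length w = S (length s)).
      { unfold w; rewrite length_app; simpl; lia. }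
      rewrite (comparable_nth t w (length s) Hp) by lia.
      unfold w; rewrite nth_middle; exact Hcx.
Qed.
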